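(* Let $G$ be a locally compact group, $X$ a proper $G$-space and $Y$ any $G$-space. Let $C\subset X$ be a closed small subset of $X$ meeting each $G$-orbit of $X$ in exactly one point. Then every continuous map $f:C\to Y$ such that $G_c\subset G_{f(c)}$ for all $c\in C$ has a unique extension to a continuous equivariant map $F:X\to Y$.
   Context: All spaces are completely regular Hausdorff. A $G$-space is a space $X$ with a continuous action $G\times X\to X$, $(g,x)\mapsto gx$, with $ex=x$ and $(gh)x=g(hx)$. $G_x=\{g\in G\mid gx=x\}$ is the stabilizer of $x$. A map $F$ is equivariant if $F(gx)=gF(x)$. For $U,V\subset X$ the transporter is $\langle U,V\rangle=\{g\in G\mid gU\cap V\neq\emptyset\}$; $U$ and $V$ are thin relative to each other if $\langle U,V\rangle$ has compact closure in $G$. A subset $U\subset X$ is small if every point of $X$ has a neighborhood thin relative to $U$. For $G$ locally compact, a $G$-space $X$ is proper if every point of $X$ has a small neighborhood. *)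

(* Defs.v *)
From Stdlib Require Import Reals List.
Open Scope R_scope.

Section Topology.

Definition is_topology {X : Type} (op : (X -> Prop) -> Prop) : Prop :=
  op (fun _ => True) /\
  (forall U V, op U -> op V -> op (fun x => U x /\ V x)) /\
  (forall (I : Type) (F : I -> X -> Prop),
      (forall i, op (F i)) -> op (fun x => exists i, F i x)).

Definition closed {X : Type} (op : (X -> Prop) -> Prop) (A : X -> Prop) : Prop :=
  op (fun x => ~ A x).

Definition continuous {A B : Type} (opA : (A -> Prop) -> Prop)
  (opB : (B -> Prop) -> Prop) (f : A -> B) : Prop :=
  forall V, opB V -> opA (fun a => V (f a)).

Definition prod_open {A B : Type} (opA : (A -> Prop) -> Prop)
  (opB : (B -> Prop) -> Prop) (W : A * B -> Prop) : Prop :=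
  forall a b, W (a, b) -> exists U V, opA U /\ opB V /\ U a /\ V b /\
    forall a' b', U a' -> V b' -> W (a', b').

Definition subspace_open {X : Type} (op : (X -> Prop) -> Prop) (C : X -> Prop)
  (W : {x | C x} -> Prop) : Prop :=
  exists U, op U /\ forall c, W c <-> U (proj1_sig c).

Definition R_open (U : R -> Prop) : Prop :=
  forall x, U x -> exists eps, eps > 0 /\ forall y, Rabs (y - x) < eps -> U y.

Definition hausdorff {X : Type} (op : (X -> Prop) -> Prop) : Prop :=
  forall x y : X, x <> y -> exists U V, op U /\ op V /\ U x /\ V y /\
    forall z, ~ (U z /\ V z).

Definition completely_regular {X : Type} (op : (X -> Prop) -> Prop) : Prop :=
  forall (A : X -> Prop) (x : X), closed op A -> ~ A x ->
    exists g : X -> R, continuous op R_open g /\ g x = 0 /\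
      forall a, A a -> g a = 1.

Definition crh_space {X : Type} (op : (X -> Prop) -> Prop) : Prop :=
  is_topology op /\ hausdorff op /\ completely_regular op.

Definition closure {X : Type} (op : (X -> Prop) -> Prop) (A : X -> Prop) (x : X)
  : Prop := forall U, op U -> U x -> exists y, U y /\ A y.

Definition compact {X : Type} (op : (X -> Prop) -> Prop) (K : X -> Prop) : Prop :=
  forall (I : Type) (U : I -> X -> Prop), (forall i, op (U i)) ->
    (forall x, K x -> exists i, U i x) ->
    exists l : list I, forall x, K x -> exists i, In i l /\ U i x.

Definition neighborhood {X : Type} (op : (X -> Prop) -> Prop) (N : X -> Prop)
  (x : X) : Prop := exists U, op U /\ U x /\ forall y, U y -> N y.

Definition locally_compact {X : Type} (op : (X -> Prop) -> Prop) : Prop :=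
  forall x, exists K, neighborhood op K x /\ compact op K.

End Topology.

Section Groups.

Definition is_group {G : Type} (mul : G -> G -> G) (inv : G -> G) (e : G) : Prop :=
  (forall a b c, mul a (mul b c) = mul (mul a b) c) /\
  (forall a, mul e a = a) /\ (forall a, mul a e = a) /\
  (forall a, mul (inv a) a = e) /\ (forall a, mul a (inv a) = e).

Definition topological_group {G : Type} (opG : (G -> Prop) -> Prop)
  (mul : G -> G -> G) (inv : G -> G) (e : G) : Prop :=
  is_group mul inv e /\
  continuous (prod_open opG opG) opG (fun p => mul (fst p) (snd p)) /\
  continuous opG opG inv.

Definition G_space {G X : Type} (opG : (G -> Prop) -> Prop) (mul : G -> G -> G)
  (e : G) (opX : (X -> Prop) -> Prop) (act : G -> X -> X) : Prop :=
  (forall x, act e x = x) /\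
  (forall g h x, act (mul g h) x = act g (act h x)) /\
  continuous (prod_open opG opX) opX (fun p => act (fst p) (snd p)).

Definition stabilizer {G X : Type} (act : G -> X -> X) (x : X) (g : G) : Prop :=
  act g x = x.

Definition equivariant {G X Y : Type} (actX : G -> X -> X) (actY : G -> Y -> Y)
  (F : X -> Y) : Prop := forall g x, F (actX g x) = actY g (F x).

Definition transporter {G X : Type} (act : G -> X -> X) (U V : X -> Prop)
  (g : G) : Prop := exists u, U u /\ V (act g u).

Definition thin {G X : Type} (opG : (G -> Prop) -> Prop) (act : G -> X -> X)
  (U V : X -> Prop) : Prop := compact opG (closure opG (transporter act U V)).

Definition small {G X : Type} (opG : (G -> Prop) -> Prop)
  (opX : (X -> Prop) -> Prop) (act : G -> X -> X) (U : X -> Prop) : Prop :=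
  forall x, exists N, neighborhood opX N x /\ thin opG act N U.

Definition proper_G_space {G X : Type} (opG : (G -> Prop) -> Prop)
  (opX : (X -> Prop) -> Prop) (act : G -> X -> X) : Prop :=
  forall x, exists N, neighborhood opX N x /\ small opG opX act N.

End Groups.

(* Main.v *)
Require Import Defs.
From Stdlib Require Import Reals List.
From Stdlib Require Import Classical ClassicalEpsilon FunctionalExtensionality PropExtensionality ProofIrrelevance.

Lemma op_ext {X : Type} (op : (X -> Prop) -> Prop) (U V : X -> Prop) :
  op U -> (forall x, U x <-> V x) -> op V.
Proof.
  intros HU H. replace V with U; auto.
  apply functional_extensionality; intro x; apply propositional_extensionality; auto.
Qed.

Lemma op_inter_list {X I : Type} (op : (X -> Prop) -> Prop) (W : I -> X -> Prop) :
  is_topology op -> (forall i, op (W i)) ->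
  forall l : list I, op (fun x => forall i, In i l -> W i x).
Proof.
  intros [HT [HI _]] HW l. induction l as [|a l IH].
  - apply (op_ext op (fun _ => True)); auto. intros x; split; auto. intros _ i [].
  - apply (op_ext op (fun x => W a x /\ (forall i, In i l -> W i x))).
    + apply HI; auto.
    + intros x; split.
      * intros [H1 H2] i [<-|Hi]; auto.
      * intros H; split; auto. apply H; simpl; auto. intros i Hi; apply H; simpl; auto.
Qed.

Theorem corollary4p3
  (G : Type) (opG : (G -> Prop) -> Prop)
  (mul : G -> G -> G) (inv : G -> G) (e : G)
  (X : Type) (opX : (X -> Prop) -> Prop) (actX : G -> X -> X)
  (Y : Type) (opY : (Y -> Prop) -> Prop) (actY : G -> Y -> Y)
  (HG : crh_space opG) (HGtop : topological_group opG mul inv e)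
  (HGlc : locally_compact opG)
  (HX : crh_space opX) (HXact : G_space opG mul e opX actX)
  (HXprop : proper_G_space opG opX actX)
  (HY : crh_space opY) (HYact : G_space opG mul e opY actY)
  (C : X -> Prop) (HCcl : closed opX C) (HCsmall : small opG opX actX C)
  (HCorb : forall x : X, exists! c : X, C c /\ exists g : G, actX g x = c)
  (f : {x : X | C x} -> Y)
  (Hf : continuous (subspace_open opX C) opY f)
  (Hstab : forall (c : {x : X | C x}) (g : G),
      stabilizer actX (proj1_sig c) g -> stabilizer actY (f c) g) :
  exists! F : X -> Y,
    continuous opX opY F /\ equivariant actX actY F /\
    forall c : {x : X | C x}, F (proj1_sig c) = f c.
Proof.
  destruct HGtop as [[Hassoc [Hel [Her [Hil Hir]]]] [_ Hinvc]].
  destruct HXact as [HXe [HXmul HXcont]].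
  destruct HYact as [HYe [HYmul HYcont]].
  destruct HX as [HXtop _].
  assert (Hfs : forall a b (pa : C a) (pb : C b), a = b ->
            f (exist C a pa) = f (exist C b pb)).
  { intros a b pa pb Hab; subst b; rewrite (proof_irrelevance _ pa pb); reflexivity. }
  assert (Hcan : forall a b, mul (inv a) (mul a b) = b).
  { intros a b; rewrite Hassoc, Hil, Hel; reflexivity. }
  assert (Hinvuniq : forall a b, mul a b = e -> b = inv a).
  { intros a b Hab. rewrite <- (Hcan a b), Hab, Her; reflexivity. }
  assert (Hback : forall g x, actX (inv g) (actX g x) = x).
  { intros g x; rewrite <- HXmul, Hil, HXe; reflexivity. }
  assert (Hex : forall x, {g : G | C (actX g x)}).
  { intro x. apply constructive_indefinite_description.
    destruct (HCorb x) as [c [[Hc [g Hg]] _]]. exists g; rewrite Hg; exact Hc. }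
  pose (F := fun x => actY (inv (proj1_sig (Hex x))) (f (exist C _ (proj2_sig (Hex x))))).
  assert (Hkey : forall x h (p : C (actX h x)), F x = actY (inv h) (f (exist C _ p))).
  { intros x h p. unfold F. destruct (Hex x) as [g pg]; simpl.
    assert (Hgh : actX g x = actX h x).
    { destruct (HCorb x) as [c [_ Hu]].
      assert (H1 : c = actX g x) by (apply Hu; split; eauto).
      assert (H2 : c = actX h x) by (apply Hu; split; eauto).
      congruence. }
    assert (Hs : actX (mul h (inv g)) (actX h x) = actX h x).
    { rewrite HXmul, <- Hgh at 1. rewrite Hback; reflexivity. }
    pose proof (Hstab (exist _ _ p) (mul h (inv g)) Hs) as Hs'.
    unfold stabilizer in Hs'; simpl in Hs'.
    rewrite (Hfs _ _ pg p Hgh).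
    rewrite <- Hs' at 2. rewrite <- HYmul, Hcan. reflexivity. }
  exists F. split; [split; [|split]|].
  -
    intros V HV.
    assert (Hloc : forall x0, V (F x0) ->
              exists W, opX W /\ W x0 /\ forall y, W y -> V (F y)).
    { intros x0 HVx0.
      destruct (HCsmall x0) as [N [[U0 [HU0 [HU0x Hsub0]]] Hthin]].
      pose (I := {p : (G -> Prop) * (X -> Prop) | opG (fst p) /\ opX (snd p) /\
                   snd p x0 /\ forall h x, fst p h -> snd p x -> C (actX h x) -> V (F x)}).
      destruct (Hthin I (fun i => fst (proj1_sig i))) as [l Hl].
      - intros i; exact (proj1 (proj2_sig i)).
      - intros g _. destruct (classic (C (actX g x0))) as [p | np].
        + rewrite (Hkey x0 g p) in HVx0.
          destruct (HYcont V HV (inv g) (f (exist C _ p)) HVx0)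
            as [A [B [HA [HB [HAg [HBf HAB]]]]]].
          destruct (Hf _ HB) as [U [HU HUiff]].
          assert (HUg : U (actX g x0)) by (apply (HUiff (exist C _ p)); exact HBf).
          destruct (HXcont U HU g x0 HUg) as [O1 [W1 [HO1 [HW1 [HO1g [HW1x HOW]]]]]].
          pose proof (Hinvc A HA) as HA'.
          assert (Hgood : opG (fun h => O1 h /\ A (inv h)) /\ opX W1 /\ W1 x0 /\
                   forall h x, (O1 h /\ A (inv h)) -> W1 x -> C (actX h x) -> V (F x)).
          { destruct HG as [[_ [HGI _]] _].
            split; [apply HGI; auto|]. split; [auto|]. split; [auto|].
            intros h x [Hh1 Hh2] Hx q. rewrite (Hkey x h q).
            apply (HAB (inv h) (f (exist C _ q))); auto.
            apply (HUiff (exist C _ q)). exact (HOW h x Hh1 Hx). }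
          exists (exist _ ((fun h => O1 h /\ A (inv h)), W1) Hgood). simpl. auto.
        + destruct (HXcont _ HCcl g x0 np) as [O1 [W1 [HO1 [HW1 [HO1g [HW1x HOW]]]]]].
          assert (Hgood : opG O1 /\ opX W1 /\ W1 x0 /\
                   forall h x, O1 h -> W1 x -> C (actX h x) -> V (F x)).
          { split; [auto|]. split; [auto|]. split; [auto|].
            intros h x Hh Hx q. exfalso. exact (HOW h x Hh Hx q). }
          exists (exist _ (O1, W1) Hgood). simpl. auto.
      - exists (fun x => U0 x /\ forall i, In i l -> snd (proj1_sig i) x).
        split; [|split].
        + destruct HXtop as [HT [HI HU]]. apply HI; auto.
          apply (op_inter_list opX (fun i : I => snd (proj1_sig i))).
          * split; auto.
          * intros i; exact (proj1 (proj2 (proj2_sig i))).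
        + split; auto. intros i _. exact (proj1 (proj2 (proj2 (proj2_sig i)))).
        + intros y [Hy Hyl]. destruct (Hex y) as [g pg].
          assert (Hcl : closure opG (transporter actX N C) g).
          { intros U HU HUg. exists g. split; auto. exists y. split; auto. }
          destruct (Hl g Hcl) as [i [Hin Hig]].
          exact (proj2 (proj2 (proj2 (proj2_sig i))) g y Hig (Hyl i Hin) pg). }
    apply (op_ext opX (fun x => exists i : {W | opX W /\ forall y, W y -> V (F y)},
                          proj1_sig i x)).
    + destruct HXtop as [_ [_ HU]]. apply HU. intros i; exact (proj1 (proj2_sig i)).
    + intros x; split.
      * intros [[W [HW Hsub]] Hx]; simpl in Hx. auto.
      * intros Hx. destruct (Hloc x Hx) as [W [HW [HWx Hsub]]].
        exists (exist _ W (conj HW Hsub)); exact HWx.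
  - intros g x. destruct (Hex x) as [h ph].
    assert (p : C (actX (mul h (inv g)) (actX g x))).
    { rewrite HXmul, Hback; exact ph. }
    rewrite (Hkey _ _ p), (Hkey x h ph).
    rewrite <- HYmul.
    assert (Hi : inv (mul h (inv g)) = mul g (inv h)).
    { symmetry; apply Hinvuniq.
      rewrite <- Hassoc, (Hassoc (inv g)), Hil, Hel, Hir; reflexivity. }
    rewrite Hi. apply f_equal. apply Hfs. rewrite HXmul, Hback; reflexivity.
  - intros [c pc]; simpl.
    assert (p : C (actX e c)) by (rewrite HXe; exact pc).
    rewrite (Hkey c e p).
    assert (Hie : inv e = e) by (rewrite <- (Hel (inv e)), Hir; reflexivity).
    rewrite Hie, HYe. apply Hfs. apply HXe.
  - intros F' [_ [HF'eq HF'c]].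
    apply functional_extensionality; intro x.
    destruct (Hex x) as [h ph].
    rewrite (Hkey x h ph).
    rewrite <- (Hback h x) at 2. rewrite HF'eq.
    rewrite <- (HF'c (exist C _ ph)); reflexivity.
Qed.
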